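(* The average-cost relative value function $V$ (the limit $\lim_{\alpha\uparrow1}(V_\alpha - V_\alpha(0))$ solving the average-cost dynamic programming equation with $V(0)=0$) is increasing in its argument: $y>z$ implies $V(z)\le V(y)$.
   Context: Single-server problem: Bernoulli($p$) arrivals, queue $X_{t+1}=X_t-D_{t+1}+\nu_t\xi_{t+1}$ on $\mathcal N=\{0,1,\dots\}$, $\nu_t\in\{0,1\}$ (1 active, 0 passive), $D_{t+1}\sim\mathrm{Binomial}(x,q/x)$ given $X_t=x\ge1$, no departures at $x=0$; $C>0$, $1>q>2p>0$, $\lambda\in\mathbb R$, cost $c(x,\nu)=Cx+(1-\nu)\lambda$. For $0<\alpha<1$, $V_\alpha(x)$ is the optimal $\alpha$-discounted cost from $x$ over admissible controls. The average-cost DP equation is $V(x)=Cx-\beta+\min\big(\mathbb{E}_x[pV(x-D+1)+(1-p)V(x-D)],\ \lambda+\mathbb{E}_x[V(x-D)]\big)$ where $\mathbb{E}_x$ is over $D\sim\mathrm{Binomial}(x,q/x)$. *)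

(* Defs.v *)
From Stdlib Require Import Reals List Lra.
Open Scope R_scope.

(* P(D = k) for D ~ Binomial(x, q/x).  For x = 0 this is the point mass at 0
   (C 0 0 * r^0 * (1-r)^0 = 1), matching "no departures at x = 0". *)
Definition dprob (q : R) (x k : nat) : R :=
  C x k * (q / INR x) ^ k * (1 - q / INR x) ^ (x - k).

Definition Edep (q : R) (x : nat) (f : nat -> R) : R :=
  sum_f_R0 (fun k => dprob q x k * f (x - k)%nat) x.

(* one-stage cost c(x,nu) = C x + (1 - nu) lambda ; nu = true means active (1) *)
Definition cost (Cc lam : R) (x : nat) (nu : bool) : R :=
  Cc * INR x + (if nu then 0 else lam).

(* An admissible (deterministic, history-dependent) control: maps the history
   of visited states (most recent first; the head is the current state; its
   length encodes time) to an action (true = active, nu = 1). *)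
Definition policy := list nat -> bool.

Fixpoint Jn (Cc p q lam alpha : R) (pi : policy) (n : nat) (h : list nat) : R :=
  match n with
  | O => 0
  | S m =>
    let x := hd O h in
    cost Cc lam x (pi h) + alpha *
      (if pi h
       then Edep q x (fun y => p * Jn Cc p q lam alpha pi m ((y + 1)%nat :: h)
                               + (1 - p) * Jn Cc p q lam alpha pi m (y :: h))
       else Edep q x (fun y => Jn Cc p q lam alpha pi m (y :: h)))
  end.

Definition disc_cost (Cc p q lam alpha : R) (pi : policy) (x : nat) (J : R) : Prop :=
  Un_cv (fun n => Jn Cc p q lam alpha pi n (x :: nil)) J.

Definition is_inf (E : R -> Prop) (m : R) : Prop :=
  (forall y, E y -> m <= y) /\ (forall b, (forall y, E y -> b <= y) -> b <= m).

Definition is_Valpha (Cc p q lam alpha : R) (x : nat) (v : R) : Prop :=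
  is_inf (fun J => exists pi : policy, disc_cost Cc p q lam alpha pi x J) v.

(* Main.v *)
Require Import Defs.
From Stdlib Require Import Reals Lra Lia Arith List.
Open Scope R_scope.

Definition E (r : R) (n : nat) (f : nat -> R) : R :=
  sum_f_R0 (fun k => C n k * r ^ k * (1 - r) ^ (n - k) * f (n - k)%nat) n.

Lemma Edep_E q x f : Edep q x f = E (q / INR x) x f.
Proof. reflexivity. Qed.

Lemma Cn0 n : C n 0 = 1.
Proof. unfold C. rewrite Nat.sub_0_r. simpl. field. apply INR_fact_neq_0. Qed.

Lemma Cnn n : C n n = 1.
Proof. unfold C. rewrite Nat.sub_diag. simpl. field. apply INR_fact_neq_0. Qed.

Lemma E0 r f : E r 0 f = f 0%nat.
Proof. unfold E. simpl. rewrite Cn0. ring. Qed.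

Lemma E_rec r n f :
  E r (S n) f = r * E r n f + (1 - r) * E r n (fun j => f (S j)).
Proof.
  set (s := 1 - r).
  unfold E. fold s.
  set (G := (fun k => C (S n) k * r ^ k * s ^ (S n - k) * f (S n - k)%nat)).
  set (A := (fun k => (if (k <=? n)%nat then C n k else 0) * r ^ k * s ^ (S n - k) * f (S n - k)%nat)).
  set (B := (fun k => r * (C n k * r ^ k * s ^ (n - k) * f (n - k)%nat))).
  assert (H1 : sum_f_R0 G (S n) = sum_f_R0 A (S n) + sum_f_R0 B n).
  { rewrite (decomp_sum G) by lia. rewrite (decomp_sum A (S n)) by lia. simpl Init.Nat.pred.
    rewrite Rplus_assoc, <- plus_sum. f_equal.
    - unfold G, A. simpl. rewrite !Cn0. ring.
    - apply sum_eq. intros i Hi. unfold G, A, B.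
      replace (S n - S i)%nat with (n - i)%nat by lia.
      destruct (Nat.eq_dec i n) as [->|Hne].
      + rewrite leb_correct_conv by lia. rewrite !Cnn. simpl. ring.
      + rewrite leb_correct by lia. rewrite <- (pascal n i) by lia. simpl. ring. }
  rewrite H1. rewrite tech5.
  assert (HA : A (S n) = 0). { unfold A. rewrite leb_correct_conv by lia. ring. }
  rewrite HA, Rplus_0_r.
  rewrite scal_sum. rewrite scal_sum. rewrite Rplus_comm. f_equal.
  - apply sum_eq. intros i Hi. unfold B. ring.
  - apply sum_eq. intros i Hi. unfold A. rewrite leb_correct by lia.
    replace (S n - i)%nat with (S (n - i)) by lia. simpl. ring.
Qed.
Lemma Rabs_le_inv x M : Rabs x <= M -> - M <= x <= M.
Proof. unfold Rabs. destruct (Rcase_abs x); lra. Qed.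

Lemma E_le r n f g : 0 <= r <= 1 -> (forall y, (y <= n)%nat -> f y <= g y) -> E r n f <= E r n g.
Proof.
  intros Hr. revert f g. induction n as [|n IH]; intros f g H.
  - rewrite !E0. apply H. lia.
  - rewrite !E_rec. apply Rplus_le_compat.
    + apply Rmult_le_compat_l; [lra|]. apply IH. intros; apply H; lia.
    + apply Rmult_le_compat_l; [lra|]. apply IH. intros; apply H; lia.
Qed.

Lemma E_bound r n f M : 0 <= r <= 1 -> (forall y, (y <= n)%nat -> Rabs (f y) <= M) -> Rabs (E r n f) <= M.
Proof.
  intros Hr. revert f. induction n as [|n IH]; intros f H.
  - rewrite !E0. apply H. lia.
  - rewrite !E_rec.
    assert (H1 : Rabs (E r n f) <= M) by (apply IH; intros; apply H; lia).
    assert (H2 : Rabs (E r n (fun j => f (S j))) <= M) by (apply IH; intros; apply H; lia).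
    revert H1 H2. generalize (E r n f) (E r n (fun j => f (S j))). intros a b H1 H2.
    apply Rabs_le. apply Rabs_le_inv in H1. apply Rabs_le_inv in H2. nra.
Qed.

Lemma E_minus r n f g : E r n f - E r n g = E r n (fun y => f y - g y).
Proof. unfold E. rewrite <- minus_sum. apply sum_eq. intros. ring. Qed.

Lemma E_ext r n f g : (forall y, f y = g y) -> E r n f = E r n g.
Proof. intros H. unfold E. apply sum_eq. intros. rewrite H. ring. Qed.

Definition mono (f : nat -> R) := forall y, f y <= f (S y).

Lemma E_shift r n f : 0 <= r <= 1 -> mono f -> E r n f <= E r n (fun j => f (S j)).
Proof. intros Hr Hf. apply E_le; auto. Qed.

Lemma mono_S f : mono f -> mono (fun j => f (S j)).
Proof. intros H y. apply H. Qed.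

Lemma E_mono_r r r' n f : 0 <= r' -> r' <= r -> r <= 1 -> mono f -> E r n f <= E r' n f.
Proof.
  intros H0 H1 H2. revert f. induction n as [|n IH]; intros f Hf.
  - rewrite !E0. lra.
  - rewrite !E_rec.
    assert (A1 := IH f Hf). assert (A2 := IH _ (mono_S f Hf)).
    assert (A3 := E_shift r' n f ltac:(lra) Hf).
    nra.
Qed.

Lemma E_mono_n r n f : 0 <= r <= 1 -> mono f -> E r n f <= E r (S n) f.
Proof.
  intros Hr Hf. rewrite E_rec. assert (A3 := E_shift r n f Hr Hf). nra.
Qed.
Lemma inv_facts x : 0 < / INR (S x) /\ / INR (S x) * INR (S x) = 1 /\ 1 <= INR (S x).
Proof.
  assert (1 <= INR (S x)) by (rewrite S_INR; pose proof (pos_INR x); lra).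
  split; [apply Rinv_0_lt_compat; lra|]. split; [apply Rinv_l; lra|lra].
Qed.

Lemma r_ok q x : 0 < q < 1 -> 0 <= q / INR x <= 1.
Proof.
  intros Hq. destruct x as [|x].
  - simpl. unfold Rdiv. rewrite Rinv_0. lra.
  - destruct (inv_facts x) as (H1 & H2 & H3). unfold Rdiv. nra.
Qed.

Lemma Edep_le q x f g : 0 < q < 1 -> (forall y, (y <= x)%nat -> f y <= g y) -> Edep q x f <= Edep q x g.
Proof. intros Hq H. rewrite !Edep_E. apply E_le; auto. apply r_ok; auto. Qed.

Lemma Edep_bound q x f M : 0 < q < 1 -> (forall y, (y <= x)%nat -> Rabs (f y) <= M) -> Rabs (Edep q x f) <= M.
Proof. intros Hq H. rewrite !Edep_E. apply E_bound; auto. apply r_ok; auto. Qed.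

Lemma Edep_mono_x q x f : 0 < q < 1 -> mono f -> Edep q x f <= Edep q (S x) f.
Proof.
  intros Hq Hf. rewrite !Edep_E. destruct x as [|x].
  - rewrite !E0. rewrite <- (E0 (q / INR 1) f). apply E_mono_n; auto. apply r_ok; auto.
  - apply Rle_trans with (E (q / INR (S (S x))) (S x) f).
    + apply E_mono_r; auto.
      * apply r_ok; auto.
      * destruct (inv_facts x) as (H1 & H2 & H3). destruct (inv_facts (S x)) as (H4 & H5 & H6).
        rewrite (S_INR (S x)) in H5 |- *. unfold Rdiv.
        apply Rmult_le_compat_l; [lra|]. nra.
      * apply r_ok; auto.
    + apply E_mono_n; auto. apply r_ok; auto.
Qed.
Fixpoint W (Cc p q lam alpha : R) (n : nat) (x : nat) : R :=
  match n with
  | O => 0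
  | S m => Cc * INR x + Rmin (alpha * Edep q x (fun y => p * W Cc p q lam alpha m (y + 1)%nat + (1 - p) * W Cc p q lam alpha m y))
                             (lam + alpha * Edep q x (fun y => W Cc p q lam alpha m y))
  end.

Lemma W_le_J Cc p q lam alpha pi n h :
  0 < q < 1 -> 0 <= p <= 1 -> 0 < alpha ->
  W Cc p q lam alpha n (hd O h) <= Jn Cc p q lam alpha pi n h.
Proof.
  intros Hq Hp Ha. revert h. induction n as [|n IH]; intros h.
  - simpl. lra.
  - simpl W. simpl Jn. unfold cost. destruct (pi h).
    + rewrite Rplus_0_r. apply Rplus_le_compat_l.
      eapply Rle_trans; [apply Rmin_l|]. apply Rmult_le_compat_l; [lra|].
      apply Edep_le; auto. intros y _.
      pose proof (IH ((y+1)%nat :: h)). pose proof (IH (y :: h)). simpl in *. nra.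
    + eapply Rle_trans; [apply Rplus_le_compat_l; apply Rmin_r|].
      rewrite Rplus_assoc. apply Rplus_le_compat_l. apply Rplus_le_compat_l.
      apply Rmult_le_compat_l; [lra|].
      apply Edep_le; auto. intros y _. apply (IH (y :: h)).
Qed.

Lemma W_mono Cc p q lam alpha n :
  0 < q < 1 -> 0 <= p <= 1 -> 0 < alpha -> 0 <= Cc -> mono (W Cc p q lam alpha n).
Proof.
  intros Hq Hp Ha HC. induction n as [|n IH]; intros x.
  - simpl. lra.
  - simpl W. apply Rplus_le_compat.
    + change (Cc * INR x <= Cc * INR (S x)). rewrite (S_INR x). nra.
    + eapply Rle_trans; [apply Rle_min_compat_r|apply Rle_min_compat_l].
      * apply Rmult_le_compat_l; [lra|]. apply Edep_mono_x; auto.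
        intros y. pose proof (IH (y+1)%nat). pose proof (IH y).
        replace (S y + 1)%nat with (S (y + 1))%nat by lia. nra.
      * apply Rplus_le_compat_l. apply Rmult_le_compat_l; [lra|]. apply Edep_mono_x; auto.
Qed.

Lemma W_mono_le Cc p q lam alpha n z y :
  0 < q < 1 -> 0 <= p <= 1 -> 0 < alpha -> 0 <= Cc -> (z <= y)%nat ->
  W Cc p q lam alpha n z <= W Cc p q lam alpha n y.
Proof.
  intros Hq Hp Ha HC Hzy. induction Hzy. lra.
  eapply Rle_trans; [eauto|]. apply W_mono; auto.
Qed.
Definition Bf (Cc lam alpha : R) (x : nat) : R :=
  (Cc * INR x + Rabs lam) * / (1 - alpha) + Cc * alpha * / (1 - alpha) * / (1 - alpha).

Lemma Bf_mono Cc lam alpha x y : 0 <= Cc -> alpha < 1 -> (x <= y)%nat -> Bf Cc lam alpha x <= Bf Cc lam alpha y.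
Proof.
  intros HC Ha Hxy. unfold Bf. apply le_INR in Hxy.
  assert (0 < / (1 - alpha)) by (apply Rinv_0_lt_compat; lra).
  apply Rplus_le_compat_r. apply Rmult_le_compat_r; [lra|]. apply Rplus_le_compat_r.
  apply Rmult_le_compat_l; lra.
Qed.

Lemma Bf_nonneg Cc lam alpha x : 0 <= Cc -> 0 <= alpha < 1 -> 0 <= Bf Cc lam alpha x.
Proof.
  intros HC Ha. unfold Bf. pose proof (pos_INR x). pose proof (Rabs_pos lam).
  assert (0 < / (1 - alpha)) by (apply Rinv_0_lt_compat; lra).
  assert (0 <= Cc * alpha * / (1 - alpha)) by (apply Rmult_le_pos; [apply Rmult_le_pos|]; lra).
  apply Rplus_le_le_0_compat; apply Rmult_le_pos; try lra.
  apply Rplus_le_le_0_compat; try lra. apply Rmult_le_pos; lra.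
Qed.

Lemma Bf_eq Cc lam alpha x : alpha < 1 ->
  Cc * INR x + Rabs lam + alpha * Bf Cc lam alpha (S x) = Bf Cc lam alpha x.
Proof. intros Ha. unfold Bf. rewrite S_INR. field. lra. Qed.

Lemma J_bound Cc p q lam alpha pi m h :
  0 < q < 1 -> 0 <= p <= 1 -> 0 < alpha < 1 -> 0 <= Cc ->
  Rabs (Jn Cc p q lam alpha pi m h) <= Bf Cc lam alpha (hd O h).
Proof.
  intros Hq Hp Ha HC. revert h. induction m as [|m IH]; intros h.
  - simpl. rewrite Rabs_R0. apply Bf_nonneg; lra.
  - rewrite <- Bf_eq by lra. simpl Jn. set (x := hd O h).
    assert (Hc : Rabs (cost Cc lam x (pi h)) <= Cc * INR x + Rabs lam).
    { unfold cost. pose proof (pos_INR x). pose proof (Rabs_pos lam).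
      destruct (pi h).
      { rewrite Rplus_0_r, Rabs_pos_eq; nra. }
      apply Rle_trans with (Rabs (Cc * INR x) + Rabs lam); [apply Rabs_triang|].
      rewrite Rabs_pos_eq; nra. }
    assert (He : Rabs (if pi h then Edep q x (fun y => p * Jn Cc p q lam alpha pi m ((y + 1)%nat :: h) + (1 - p) * Jn Cc p q lam alpha pi m (y :: h))
       else Edep q x (fun y => Jn Cc p q lam alpha pi m (y :: h))) <= Bf Cc lam alpha (S x)).
    { destruct (pi h); apply Edep_bound; auto; intros y Hy.
      - pose proof (IH ((y+1)%nat :: h)) as A1. pose proof (IH (y :: h)) as A2. simpl in A1, A2.
        assert (Bf Cc lam alpha (y+1) <= Bf Cc lam alpha (S x)) by (apply Bf_mono; [lra|lra|lia]).
        assert (Bf Cc lam alpha y <= Bf Cc lam alpha (S x)) by (apply Bf_mono; [lra|lra|lia]).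
        apply Rabs_le_inv in A1. apply Rabs_le_inv in A2. apply Rabs_le. split; nra.
      - eapply Rle_trans; [apply (IH (y :: h))|]. simpl. apply Bf_mono. lra. lra. lia. }
    revert Hc He. generalize (cost Cc lam x (pi h)). intros c Hc He.
    eapply Rle_trans; [apply Rabs_triang|]. apply Rplus_le_compat; auto.
    rewrite Rabs_mult, (Rabs_pos_eq alpha) by lra. apply Rmult_le_compat_l; lra.
Qed.
Lemma J_diff Cc p q lam alpha pi n :
  0 < q < 1 -> 0 <= p <= 1 -> 0 < alpha < 1 -> 0 <= Cc ->
  forall m h x, (hd O h <= x)%nat ->
  Rabs (Jn Cc p q lam alpha pi (n + m) h - Jn Cc p q lam alpha pi n h) <= alpha ^ n * Bf Cc lam alpha (x + n).
Proof.
  intros Hq Hp Ha HC. induction n as [|n IH]; intros m h x Hx.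
  - simpl. rewrite Rminus_0_r, Rmult_1_l. eapply Rle_trans; [apply J_bound; auto|].
    apply Bf_mono; [lra|lra|lia].
  - simpl plus. simpl Jn. set (xx := hd O h).
    replace (x + S n)%nat with (S x + n)%nat by lia.
    destruct (pi h).
    + rewrite !Edep_E.
      match goal with |- Rabs (?c + alpha * ?a - (?c + alpha * ?b)) <= _ =>
        replace (c + alpha * a - (c + alpha * b)) with (alpha * (a - b)) by ring end.
      rewrite E_minus. rewrite Rabs_mult, (Rabs_pos_eq alpha) by lra. simpl pow.
      rewrite Rmult_assoc. apply Rmult_le_compat_l; [lra|].
      apply E_bound. apply r_ok; auto. intros y Hy.
      pose proof (IH m ((y+1)%nat :: h) (S x) ltac:(simpl; unfold xx in Hy; lia)) as A1.
      pose proof (IH m (y :: h) (S x) ltac:(simpl; unfold xx in Hy; lia)) as A2.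
      apply Rabs_le_inv in A1. apply Rabs_le_inv in A2. apply Rabs_le.
      assert (0 <= alpha ^ n * Bf Cc lam alpha (S x + n)).
      { apply Rmult_le_pos; [apply pow_le; lra| apply Bf_nonneg; lra]. }
      split; nra.
    + rewrite !Edep_E.
      match goal with |- Rabs (?c + alpha * ?a - (?c + alpha * ?b)) <= _ =>
        replace (c + alpha * a - (c + alpha * b)) with (alpha * (a - b)) by ring end.
      rewrite E_minus. rewrite Rabs_mult, (Rabs_pos_eq alpha) by lra. simpl pow.
      rewrite Rmult_assoc. apply Rmult_le_compat_l; [lra|].
      apply E_bound. apply r_ok; auto. intros y Hy.
      apply (IH m (y :: h) (S x)). simpl; unfold xx in Hy; lia.
Qed.
Lemma pow_le1 a n : 0 <= a <= 1 -> a ^ n <= 1.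
Proof. intros Ha. induction n; simpl. lra. assert (0 <= a ^ n) by (apply pow_le; lra). nra. Qed.

Lemma bern alpha n : 0 < alpha < 1 -> alpha ^ n * (alpha + INR n * (1 - alpha)) <= alpha.
Proof.
  intros Ha. induction n as [|n IH].
  - simpl. lra.
  - rewrite S_INR. simpl pow.
    assert (0 <= alpha ^ n) by (apply pow_le; lra).
    assert (alpha ^ n <= 1) by (apply pow_le1; lra).
    replace (alpha * alpha ^ n * (alpha + (INR n + 1) * (1 - alpha)))
      with (alpha * (alpha ^ n * (alpha + INR n * (1 - alpha))) + alpha * alpha ^ n * (1 - alpha)) by ring.
    assert (alpha * (alpha ^ n * (alpha + INR n * (1 - alpha))) <= alpha * alpha) by (apply Rmult_le_compat_l; lra).
    assert (alpha * alpha ^ n * (1 - alpha) <= alpha * 1 * (1 - alpha)).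
    { apply Rmult_le_compat_r; [lra|]. apply Rmult_le_compat_l; lra. }
    lra.
Qed.

Lemma npow_bound alpha n : 0 < alpha < 1 -> alpha ^ n * INR n <= / (1 - alpha).
Proof.
  intros Ha. pose proof (bern alpha n Ha).
  assert (0 <= alpha ^ n) by (apply pow_le; lra).
  assert (0 <= alpha ^ n * alpha) by (apply Rmult_le_pos; lra).
  assert (alpha ^ n * INR n * (1 - alpha) <= 1) by nra.
  assert (0 < 1 - alpha) by lra.
  apply Rmult_le_reg_r with (1 - alpha); auto.
  rewrite Rinv_l by lra. lra.
Qed.

Lemma tail_small Cc lam alpha x eps : 0 < alpha < 1 -> 0 <= Cc -> 0 < eps ->
  exists N, alpha ^ N * Bf Cc lam alpha (x + N) < eps.
Proof.
  intros Ha HC He.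
  set (k := / (1 - alpha)).
  assert (Hk : 0 < k) by (apply Rinv_0_lt_compat; lra).
  set (A := (Cc * INR x + Rabs lam) * k + Cc * alpha * k * k + Cc * 2 * k * k).
  assert (HA : 0 <= A).
  { unfold A. pose proof (pos_INR x). pose proof (Rabs_pos lam).
    assert (0 <= Cc * INR x) by (apply Rmult_le_pos; lra).
    assert (0 <= Cc * alpha) by (apply Rmult_le_pos; lra).
    assert (0 <= Cc * alpha * k) by (apply Rmult_le_pos; lra).
    assert (0 <= Cc * 2 * k) by (apply Rmult_le_pos; lra).
    assert (0 <= Cc * alpha * k * k) by (apply Rmult_le_pos; lra).
    assert (0 <= Cc * 2 * k * k) by (apply Rmult_le_pos; lra).
    assert (0 <= (Cc * INR x + Rabs lam) * k) by (apply Rmult_le_pos; lra). lra. }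
  destruct (pow_lt_1_zero alpha ltac:(rewrite Rabs_pos_eq; lra) (eps / (A + 1)) ltac:(apply Rdiv_lt_0_compat; lra)) as [K HK].
  specialize (HK K (le_n K)). rewrite Rabs_pos_eq in HK by (apply pow_le; lra).
  exists (K + K)%nat.
  assert (H1 : alpha ^ (K + K) <= alpha ^ K).
  { rewrite pow_add. assert (0 <= alpha ^ K) by (apply pow_le; lra).
    assert (alpha ^ K <= 1) by (apply pow_le1; lra). nra. }
  assert (H2 : alpha ^ (K + K) * INR (K + K) <= alpha ^ K * (2 * k)).
  { rewrite pow_add, plus_INR. pose proof (npow_bound alpha K Ha). fold k in H.
    assert (0 <= alpha ^ K) by (apply pow_le; lra).
    replace (alpha ^ K * alpha ^ K * (INR K + INR K)) with (alpha ^ K * (2 * (alpha ^ K * INR K))) by ring.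
    apply Rmult_le_compat_l; lra. }
  assert (H3 : alpha ^ (K + K) * Bf Cc lam alpha (x + (K + K)) <= alpha ^ K * A).
  { unfold Bf. fold k. rewrite plus_INR.
    assert (0 <= alpha ^ (K + K)) by (apply pow_le; lra).
    replace (alpha ^ (K + K) * ((Cc * (INR x + INR (K + K)) + Rabs lam) * k + Cc * alpha * k * k))
      with (alpha ^ (K + K) * ((Cc * INR x + Rabs lam) * k + Cc * alpha * k * k) + Cc * k * (alpha ^ (K + K) * INR (K + K))) by ring.
    unfold A.
    assert (0 <= (Cc * INR x + Rabs lam) * k + Cc * alpha * k * k).
    { pose proof (pos_INR x). pose proof (Rabs_pos lam).
      assert (0 <= Cc * INR x) by (apply Rmult_le_pos; lra).
      assert (0 <= Cc * alpha) by (apply Rmult_le_pos; lra).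
      assert (0 <= Cc * alpha * k) by (apply Rmult_le_pos; lra).
      assert (0 <= Cc * alpha * k * k) by (apply Rmult_le_pos; lra).
      assert (0 <= (Cc * INR x + Rabs lam) * k) by (apply Rmult_le_pos; lra). lra. }
    assert (0 <= Cc * k) by (apply Rmult_le_pos; lra).
    assert (Cc * k * (alpha ^ (K + K) * INR (K + K)) <= Cc * k * (alpha ^ K * (2 * k))) by (apply Rmult_le_compat_l; lra).
    assert (alpha ^ (K + K) * ((Cc * INR x + Rabs lam) * k + Cc * alpha * k * k) <= alpha ^ K * ((Cc * INR x + Rabs lam) * k + Cc * alpha * k * k)) by (apply Rmult_le_compat_r; lra).
    nra. }
  assert (alpha ^ K * A <= eps / (A + 1) * A).
  { apply Rmult_le_compat_r; lra. }
  assert (eps / (A + 1) * A < eps).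
  { unfold Rdiv. replace (eps * / (A + 1) * A) with (eps * (A / (A + 1))) by (field; lra).
    assert (A / (A + 1) < 1). { apply Rmult_lt_reg_r with (A + 1); [lra|]. unfold Rdiv. rewrite Rmult_assoc, Rinv_l by lra. lra. }
    nra. }
  lra.
Qed.

Lemma lim_close (u : nat -> R) l N e : Un_cv u l -> (forall m, Rabs (u (N + m)%nat - u N) <= e) -> Rabs (l - u N) <= e.
Proof.
  intros Hu Hb. destruct (Rle_dec (Rabs (l - u N)) e) as [H|H]; auto. exfalso.
  destruct (Hu (Rabs (l - u N) - e) ltac:(lra)) as [M HM].
  specialize (HM (N + M)%nat ltac:(lia)). specialize (Hb M). unfold Rdist in HM.
  pose proof (Rabs_triang (l - u (N + M)%nat) (u (N + M)%nat - u N)).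
  replace (l - u (N + M)%nat + (u (N + M)%nat - u N)) with (l - u N) in H0 by ring.
  rewrite <- Rabs_Ropp in HM. replace (- (u (N + M)%nat - l)) with (l - u (N + M)%nat) in HM by ring. lra.
Qed.
Lemma cv_exists Cc p q lam alpha pi x :
  0 < q < 1 -> 0 <= p <= 1 -> 0 < alpha < 1 -> 0 <= Cc ->
  exists J, disc_cost Cc p q lam alpha pi x J.
Proof.
  intros Hq Hp Ha HC.
  set (u := fun n => Jn Cc p q lam alpha pi n (x :: nil)).
  assert (Hc : Cauchy_crit u).
  { intros eps He. destruct (tail_small Cc lam alpha x (eps / 2) Ha HC ltac:(lra)) as [N HN].
    exists N. intros n m Hn Hm. unfold Rdist.
    pose proof (J_diff Cc p q lam alpha pi N Hq Hp Ha HC (n - N) (x :: nil) x (le_n x)) as A1.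
    pose proof (J_diff Cc p q lam alpha pi N Hq Hp Ha HC (m - N) (x :: nil) x (le_n x)) as A2.
    replace (N + (n - N))%nat with n in A1 by lia. replace (N + (m - N))%nat with m in A2 by lia.
    fold (u n) (u N) in A1. fold (u m) (u N) in A2.
    pose proof (Rabs_triang (u n - u N) (u N - u m)).
    replace (u n - u N + (u N - u m)) with (u n - u m) in H by ring.
    rewrite <- Rabs_Ropp in A2. replace (- (u m - u N)) with (u N - u m) in A2 by ring. lra. }
  destruct (R_complete u Hc) as [l Hl]. exists l. exact Hl.
Qed.

Lemma J_close Cc p q lam alpha pi x N J :
  0 < q < 1 -> 0 <= p <= 1 -> 0 < alpha < 1 -> 0 <= Cc ->
  disc_cost Cc p q lam alpha pi x J ->
  Rabs (J - Jn Cc p q lam alpha pi N (x :: nil)) <= alpha ^ N * Bf Cc lam alpha (x + N).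
Proof.
  intros Hq Hp Ha HC HJ. apply (lim_close (fun n => Jn Cc p q lam alpha pi n (x :: nil))); auto.
  intros m. apply J_diff; auto.
Qed.

Definition greedy (Cc p q lam alpha : R) (k x : nat) : bool :=
  match k with
  | O => true
  | S k' => if Rle_dec (alpha * Edep q x (fun y => p * W Cc p q lam alpha k' (y + 1)%nat + (1 - p) * W Cc p q lam alpha k' y))
                      (lam + alpha * Edep q x (fun y => W Cc p q lam alpha k' y)) then true else false
  end.

Definition piN (Cc p q lam alpha : R) (N : nat) : policy :=
  fun h => if (length h <=? N)%nat then greedy Cc p q lam alpha (N + 1 - length h) (hd O h) else true.

Lemma piN_val Cc p q lam alpha N k :
  (k <= N)%nat -> forall h, length h = S (N - k) ->
  Jn Cc p q lam alpha (piN Cc p q lam alpha N) k h = W Cc p q lam alpha k (hd O h).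
Proof.
  induction k as [|k IH]; intros Hk h Hl.
  - reflexivity.
  - simpl Jn. simpl W.
    assert (Hpi : piN Cc p q lam alpha N h = greedy Cc p q lam alpha (S k) (hd O h)).
    { unfold piN. rewrite Hl. rewrite leb_correct by lia. f_equal. lia. }
    rewrite Hpi. unfold greedy, cost.
    assert (E1 : Edep q (hd O h) (fun y => p * Jn Cc p q lam alpha (piN Cc p q lam alpha N) k ((y + 1)%nat :: h) + (1 - p) * Jn Cc p q lam alpha (piN Cc p q lam alpha N) k (y :: h))
               = Edep q (hd O h) (fun y => p * W Cc p q lam alpha k (y + 1)%nat + (1 - p) * W Cc p q lam alpha k y)).
    { rewrite !Edep_E. apply E_ext. intros y. rewrite !IH by (simpl; lia). reflexivity. }
    assert (E2 : Edep q (hd O h) (fun y => Jn Cc p q lam alpha (piN Cc p q lam alpha N) k (y :: h))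
               = Edep q (hd O h) (fun y => W Cc p q lam alpha k y)).
    { rewrite !Edep_E. apply E_ext. intros y. rewrite !IH by (simpl; lia). reflexivity. }
    rewrite E1, E2.
    destruct (Rle_dec _ _) as [H|H].
    + rewrite Rmin_left by lra. ring.
    + rewrite Rmin_right by lra. ring.
Qed.
Lemma Va_mono Cc p q lam alpha vz vy z y :
  0 < q < 1 -> 0 <= p <= 1 -> 0 < alpha < 1 -> 0 <= Cc -> (z <= y)%nat ->
  is_Valpha Cc p q lam alpha z vz -> is_Valpha Cc p q lam alpha y vy -> vz <= vy.
Proof.
  intros Hq Hp Ha HC Hzy [Hz1 Hz2] [Hy1 Hy2].
  destruct (Rle_dec vz vy) as [H|H]; auto. exfalso.
  destruct (tail_small Cc lam alpha y ((vz - vy) / 2) Ha HC ltac:(lra)) as [N HN].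
  set (t := alpha ^ N * Bf Cc lam alpha (y + N)) in HN.
  assert (Ht : alpha ^ N * Bf Cc lam alpha (z + N) <= t).
  { apply Rmult_le_compat_l; [apply pow_le; lra|]. apply Bf_mono; [lra|lra|lia]. }
  destruct (cv_exists Cc p q lam alpha (piN Cc p q lam alpha N) z Hq Hp Ha HC) as [J HJ].
  assert (U1 : vz <= J) by (apply Hz1; eauto).
  pose proof (J_close _ _ _ _ _ _ _ N _ Hq Hp Ha HC HJ) as U2.
  rewrite (piN_val Cc p q lam alpha N N (le_n N) (z :: nil)) in U2 by (simpl; lia).
  simpl hd in U2. apply Rabs_le_inv in U2.
  assert (L : W Cc p q lam alpha N y - t <= vy).
  { apply Hy2. intros J' [pi Hpi].
    pose proof (J_close _ _ _ _ _ _ _ N _ Hq Hp Ha HC Hpi) as L1. apply Rabs_le_inv in L1.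
    pose proof (W_le_J Cc p q lam alpha pi N (y :: nil) Hq Hp ltac:(lra)). simpl hd in H0.
    fold t in L1. lra. }
  pose proof (W_mono_le Cc p q lam alpha N z y Hq Hp ltac:(lra) HC Hzy).
  pose proof (Bf_nonneg Cc lam alpha (y + N) HC ltac:(lra)).
  lra.
Qed.

Theorem lemma5 (Cc p q lam : R) (Valpha : R -> nat -> R) (V : nat -> R)
  (hC : 0 < Cc) (hp : 0 < p) (hpq : 2 * p < q) (hq : q < 1)
  (hVa : forall alpha x, 0 < alpha < 1 -> is_Valpha Cc p q lam alpha x (Valpha alpha x))
  (hV : forall x eps, 0 < eps -> exists delta, 0 < delta /\
          forall alpha, 1 - delta < alpha < 1 ->
            Rabs (Valpha alpha x - Valpha alpha 0%nat - V x) < eps) :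
  forall y z : nat, (y > z)%nat -> V z <= V y.
Proof.
  intros y z Hyz. destruct (Rle_dec (V z) (V y)) as [H|H]; auto. exfalso.
  set (e := (V z - V y) / 2).
  destruct (hV z e ltac:(unfold e; lra)) as [d1 [Hd1 H1]].
  destruct (hV y e ltac:(unfold e; lra)) as [d2 [Hd2 H2]].
  set (d := Rmin 1 (Rmin d1 d2)).
  assert (Hd : 0 < d /\ d <= 1 /\ d <= d1 /\ d <= d2).
  { unfold d. pose proof (Rmin_l 1 (Rmin d1 d2)). pose proof (Rmin_r 1 (Rmin d1 d2)).
    pose proof (Rmin_l d1 d2). pose proof (Rmin_r d1 d2).
    repeat split; try lra. apply Rmin_glb_lt; [lra|]. apply Rmin_glb_lt; lra. }
  set (a := 1 - d / 2).
  assert (Ha : 0 < a < 1) by (unfold a; lra).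
  specialize (H1 a ltac:(unfold a; lra)). specialize (H2 a ltac:(unfold a; lra)).
  apply Rabs_def2 in H1. apply Rabs_def2 in H2.
  assert (M : Valpha a z <= Valpha a y).
  { apply (Va_mono Cc p q lam a _ _ z y); try lra; try lia; apply hVa; auto. }
  unfold e in *. lra.
Qed.
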